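(* Let $c, d \geq 1$ be integers, $n = cd$ and $\lambda = (c^d)$. Define $$A_c(d) = \sum_{\tilde\lambda \in \mathrm{Ev}(\lambda)} \chi^{(n,n)}_{\tilde\lambda},$$ where the sum runs over the multiset $\mathrm{Ev}(\lambda)$ with multiplicity. Then $A_c(d) = 2^d R(d)$ if $c=1$, and $A_c(d) = 2^d T(d)$ if $c>1$.
   Context: For partitions $\mu,\nu$ of $m$, $\chi^\mu_\nu$ is the value of the irreducible complex character of the symmetric group $\Sigma_m$ indexed by $\mu$ on a permutation of cycle type $\nu$. For a partition $\lambda=(\lambda_1,\dots,\lambda_r)$ of $n$ with $r$ nonzero parts, $\mathrm{Ev}(\lambda)$ is the multiset of $2^r$ partitions of $2n$ obtained by choosing, for each $i=1,\dots,r$ independently, to replace $\lambda_i$ either by the single part $2\lambda_i$ or by two parts $\lambda_i,\lambda_i$, and then sorting the parts in nonincreasing order (each of the $2^r$ choices contributes one element). $R(d)$ is the $d$-th Riordan number (the number of Motzkin paths of length $d$ — lattice paths from $(0,0)$ to $(d,0)$ with steps $(1,1),(1,0),(1,-1)$ never going below the $x$-axis — with no flat step on the $x$-axis). $T(d)$ is the central trinomial coefficient, the coefficient of $x^d$ in $(1+x+x^2)^d$. *)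

(* Defs.v *)
From HB Require Import structures.
From mathcomp Require Import all_boot all_order all_algebra.
From mathcomp Require Import mpoly.
Set Implicit Arguments. Unset Strict Implicit. Unset Printing Implicit Defensive.
Import Order.TTheory GRing.Theory Num.Theory.

Definition is_partition (s : seq nat) : bool :=
  sorted geq s && all (fun k => 0 < k) s.

Local Open Scope ring_scope.

Definition psum (l k : nat) : {mpoly int[l]} := \sum_(i < l) 'X_i ^+ k.

Definition vdm (l : nat) : {mpoly int[l]} :=
  \prod_(i < l) \prod_(j < l | (i < j)%N) ('X_i - 'X_j).

(* Frobenius' formula for the irreducible character of the symmetric group:
   chi^mu_nu = coefficient of x^(mu + delta) in a_delta * p_nu,
   computed with l = size mu variables, delta = (l-1, ..., 1, 0). *)
Definition sym_char (mu nu : seq nat) : int :=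
  let l := size mu in
  (vdm l * \prod_(k <- nu) psum l k)@_[multinom (nth 0%N mu i + (l - 1 - i))%N | i < l].

(* Ev(lambda): multiset (as a list, with multiplicity) of the 2^r
   partitions of 2n obtained by replacing each part lambda_i either by
   2 lambda_i or by lambda_i, lambda_i, then sorting. *)
Fixpoint ev_raw (lam : seq nat) : seq (seq nat) :=
  match lam with
  | [::] => [:: [::]]
  | x :: l => [seq (x.*2)%N :: s | s <- ev_raw l] ++ [seq x :: x :: s | s <- ev_raw l]
  end.
Definition Ev (lam : seq nat) : seq (seq nat) := [seq sort geq s | s <- ev_raw lam].

Definition A_c (c d : nat) : int :=
  \sum_(nu <- Ev (nseq d c)) sym_char [:: (c * d)%N; (c * d)%N] nu.

(* Motzkin paths: steps coded in 'I_3 as 0 = down (1,-1), 1 = flat (1,0),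
   2 = up (1,1).  riordan_ok h s: starting at height h, the path s never
   goes below the axis, has no flat step on the axis, and ends at height 0. *)
Fixpoint riordan_ok (h : nat) (s : seq 'I_3) : bool :=
  match s with
  | [::] => h == 0%N
  | x :: s' =>
      if val x == 0%N then (0 < h)%N && riordan_ok h.-1 s'
      else if val x == 1%N then (0 < h)%N && riordan_ok h s'
      else riordan_ok h.+1 s'
  end.
Definition riordan (d : nat) : nat := #|[pred p : d.-tuple 'I_3 | riordan_ok 0 p]|.

Definition central_trinomial (d : nat) : int :=
  ((1 + 'X + 'X^2 : {poly int}) ^+ d)`_d.

(* Main.v *)
Require Import Defs.
From HB Require Import structures.
From mathcomp Require Import all_boot all_order all_algebra.
From mathcomp Require Import mpoly.
From mathcomp Require Import zify ring lra.
Set Implicit Arguments. Unset Strict Implicit. Unset Printing Implicit Defensive.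
Import Order.TTheory GRing.Theory Num.Theory.
Local Open Scope ring_scope.

Fixpoint tri (d : nat) (j : int) : int :=
  if d is d'.+1 then tri d' (j - 1) + tri d' j + tri d' (j + 1)
  else ((j == 0) : nat)%:Z.

Lemma tri_sym d j : tri d (- j) = tri d j.
Proof.
elim: d j => [|d IH] j /=; first by rewrite oppr_eq0.
have e1 : - j - 1 = - (j + 1) by rewrite opprD.
have e2 : - j + 1 = - (j - 1) by rewrite opprB addrC.
rewrite e1 e2 !IH; ring.
Qed.

Lemma tri_small d (j : int) : j + d%:Z < 0 -> tri d j = 0.
Proof.
elim: d j => [|d IH] j /= h.
  by have -> : (j == 0) = false by apply/eqP; lia.
rewrite !IH ?addr0 //; lia.
Qed.

Definition P3 : {poly int} := 1 + 'X + 'X^2.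

Lemma coefP3 d i : (P3 ^+ d)`_i = tri d (i%:Z - d%:Z).
Proof.
elim: d i => [|d IH] i.
  by rewrite expr0 coef1 /= subr0; case: i.
rewrite exprS /P3 !mulrDl mul1r !coefD coefXM coefXnM !IH /=.
case: i => [|i].
  rewrite /=.
  have -> : tri d (0%Z - (d.+1)%:Z - 1) = 0 by apply: tri_small; lia.
  have -> : tri d (0%Z - (d.+1)%:Z) = 0 by apply: tri_small; lia.
  rewrite !addr0 -[LHS]add0r; congr (_ + tri _ _); lia.
case: i => [|i].
  rewrite /=.
  have -> : tri d (1%:Z - (d.+1)%:Z - 1) = 0 by apply: tri_small; lia.
  rewrite !addr0 [in RHS]add0r [LHS]addrC; congr (_ + _); congr (tri _ _); lia.
rewrite /=.
have e1 : ((i.+2)%:Z - (d.+1)%:Z - 1) = ((i.+2 - 2)%N%:Z - d%:Z) by lia.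
have e2 : ((i.+2)%:Z - (d.+1)%:Z) = ((i.+1)%N%:Z - d%:Z) by lia.
have e3 : ((i.+2)%:Z - (d.+1)%:Z + 1) = ((i.+2)%N%:Z - d%:Z) by lia.
rewrite e3 e1 e2; ring.
Qed.
Local Close Scope ring_scope.
Lemma sum_tuple_cons (T : finType) n (F : n.+1.-tuple T -> nat) :
  \sum_(p : n.+1.-tuple T) F p = \sum_(x : T) \sum_(t : n.-tuple T) F (cons_tuple x t).
Proof.
rewrite pair_big /=.
rewrite (reindex (fun p : T * n.-tuple T => cons_tuple p.1 p.2)) //.
exists (fun t => (thead t, behead_tuple t)).
  by move=> [x t] _ /=; rewrite theadE; congr (_, _); apply: val_inj.
by move=> t _ /=; rewrite [RHS]tuple_eta; apply: val_inj.
Qed.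

Definition Nr d h : nat := \sum_(p : d.-tuple 'I_3) riordan_ok h p.

Lemma riordanE d : riordan d = Nr d 0.
Proof.
rewrite /riordan /Nr -sum1_card big_mkcond /=.
by apply: eq_bigr => p _; rewrite inE; case: (riordan_ok 0 p).
Qed.

Lemma Nr0 h : Nr 0 h = (h == 0).
Proof.
rewrite /Nr (eq_bigr (fun _ => (h == 0) : nat)); last by move=> t _; rewrite tuple0.
by rewrite sum_nat_const card_tuple card_ord expn0 mul1n.
Qed.

Lemma NrS d h : Nr d.+1 h = (0 < h) * Nr d h.-1 + (0 < h) * Nr d h + Nr d h.+1.
Proof.
rewrite /Nr sum_tuple_cons !big_ord_recl big_ord0 addn0 /=.
rewrite !big_distrr /=.
rewrite addnA; congr (_ + _ + _); apply: eq_bigr => t _ /=; case: (0 < h); rewrite ?mul1n ?mul0n //.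
Qed.
Local Open Scope ring_scope.
Lemma Nr_tri d (h : nat) : (Nr d h)%:Z = tri d h%:Z - tri d (h%:Z + 1).
Proof.
elim: d h => [|d IH] h.
  rewrite Nr0 /=; case: h => [|h] //=.
rewrite NrS PoszD PoszD !PoszM.
case: h => [|h] /=.
  rewrite !mul0r !add0r IH.
  have -> : tri d (0 - 1) = tri d 1 by rewrite sub0r tri_sym.
  have -> : (1 - 1 : int) = 0 by [].
  have -> : (1%Z + 1 : int) = 1 + 1 by [].
  have -> : (0%Z : int) = 0 by [].
  ring.
rewrite !IH.
have -> : (h.+1)%:Z - 1 = h%:Z by lia.
have -> : (h.+1)%:Z + 1 - 1 = h%:Z + 1 by lia.
have -> : (h.+1)%:Z = h%:Z + 1 by lia.
have -> : ((h.+2)%:Z) = h%:Z + 1 + 1 by lia.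
ring.
Qed.
Lemma mcoeffMX' n (p : {mpoly int[n]}) m k :
  (p * 'X_[m])@_k = if (m <= k)%MM then p@_(k - m) else 0.
Proof.
case: ifP => h.
  by rewrite -{1}(submK h) addmC mcoeffMX.
apply/eqP; rewrite mcoeff_eq0 (perm_mem (msuppMX p m)).
apply/mapP => [[m' _ E]]; move: h; rewrite E lem_addr //.
Qed.

Definition i0 : 'I_2 := ord0.
Definition i1 : 'I_2 := ord_max.

Lemma lemU (i : 'I_2) k (m : 'X_{1..2}) : (U_(i) *+ k <= m)%MM = (k <= m i)%N.
Proof.
apply/mnm_lepP/idP => [/(_ i)|h j]; first by rewrite mulmnE mnm1E eqxx mul1n.
rewrite mulmnE mnm1E; case: eqP => [<-|_]; first by rewrite mul1n.
by rewrite mul0n.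
Qed.

Lemma XiE n (i : 'I_n) k : ('X_i ^+ k : {mpoly int[n]}) = 'X_[U_(i) *+ k].
Proof. by rewrite mpolyXn. Qed.

Definition qpoly (nu : seq nat) : {poly int} := \prod_(k <- nu) (1 + 'X^k).

Lemma coef_qpoly_cons k nu j :
  (qpoly (k :: nu))`_j = (qpoly nu)`_j + (if (j < k)%N then 0 else (qpoly nu)`_(j - k)).
Proof. by rewrite /qpoly big_cons mulrDl mul1r coefD coefXnM. Qed.

Lemma coef_qpoly_big nu j : (sumn nu < j)%N -> (qpoly nu)`_j = 0.
Proof.
elim: nu j => [|k nu IH] j /= h.
  by rewrite /qpoly big_nil coef1; case: j h.
rewrite coef_qpoly_cons IH; last lia.
case: ifP => // h2; rewrite IH; last lia.
by rewrite addr0.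
Qed.

Lemma mnm2P (m : 'X_{1..2}) : m = [multinom (if val i == 0%N then m i0 else m i1) | i < 2].
Proof.
apply/mnmP => i; rewrite mnmE.
case: i => [[|[|i]] Hi] //=.
  by congr (m _); apply: val_inj.
by congr (m _); apply: val_inj.
Qed.

Lemma Qcoef (nu : seq nat) (m : 'X_{1..2}) :
  (\prod_(k <- nu) psum 2 k)@_m =
  if (m i0 + m i1 == sumn nu)%N then (qpoly nu)`_(m i0) else 0.
Proof.
elim: nu m => [|k nu IH] m /=.
  rewrite big_nil mcoeff1 /qpoly big_nil coef1.
  case: (m =P 0%MM) => [->|ne]; first by rewrite !mnm0E.
  have -> : (m i0 + m i1 == 0)%N = false.
    apply/negP => /eqP h; apply: ne; rewrite (mnm2P m); apply/mnmP => i.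
    rewrite mnmE mnm0E; case: ifP => _; lia.
  by [].
rewrite big_cons /psum !big_ord_recl big_ord0 addr0 mulrDl mcoeffD.
rewrite ![_ * \prod_(_ <- _) _]mulrC.
rewrite !XiE !mcoeffMX' !lemU !IH !mnmBE !mulmnE !mnm1E /=.
rewrite coef_qpoly_cons.
have -> : m ord0 = m i0 by [].
have -> : m (lift ord0 ord0) = m i1 by congr (m _); apply: val_inj.
rewrite !mul1n !mul0n !subn0.
move: (m i0) (m i1) => a b.
repeat (case: ifP => /eqP ?); rewrite ?addr0 ?add0r //; try (exfalso; lia).
all: try (rewrite addrC; congr (_ + _); congr (_ `_ _); lia).
all: rewrite (@coef_qpoly_big nu a) ?add0r //; lia.
Qed.

Lemma vdm2 : vdm 2 = 'X_i0 - 'X_i1.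
Proof.
rewrite /vdm big_ord_recl big_ord_recl big_ord0 !big_mkcond /=.
rewrite !big_ord_recl !big_ord0 /=.
rewrite big_mkcond !big_ord_recl !big_ord0 /= !mul1r !mulr1.
by congr (_ - 'X_ _); apply: val_inj.
Qed.

Lemma sym_charE n nu : (0 < n)%N ->
  sym_char [:: n; n] nu =
  if (sumn nu == n.*2)%N then (qpoly nu)`_n - (qpoly nu)`_n.+1 else 0.
Proof.
move=> n0; rewrite /sym_char /= vdm2 mulrBl mcoeffB.
rewrite ![_ * \prod_(_ <- _) _]mulrC.
rewrite -[('X_i0 : {mpoly int[2]})]expr1 -[('X_i1 : {mpoly int[2]})]expr1 !XiE.
rewrite !mcoeffMX' !lemU !Qcoef !mnmBE !mulmnE !mnm1E !mnmE /=.
have -> : (n + (2 - 1 - 0))%N = n.+1 by lia.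
have -> : (n + (2 - 1 - 1))%N = n by lia.
rewrite !mul1n !mul0n !subn0 subn1 /= n0.
have -> : (n + n = n.*2)%N by lia.
have -> : (n.+1 + (n - 1) = n.*2)%N by lia.
by rewrite eq_sym; case: eqP => _; rewrite ?subr0.
Qed.

Lemma ev_sumn lam s : s \in ev_raw lam -> sumn s = (sumn lam).*2.
Proof.
elim: lam s => [|x l IH] s /=; first by rewrite inE => /eqP ->.
rewrite mem_cat => /orP [] /mapP [t /IH Ht ->] /=; rewrite Ht; lia.
Qed.

Definition Spoly lam : {poly int} := \sum_(s <- ev_raw lam) qpoly s.

Lemma Spoly_cons x l :
  Spoly (x :: l) = ((1 + 'X^(x.*2)) + (1 + 'X^x) ^+ 2) * Spoly l.
Proof.
rewrite /Spoly /= big_cat !big_map /= mulrDl !big_distrr /=.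
congr (_ + _); apply: eq_bigr => s _; rewrite /qpoly !big_cons //.
by rewrite expr2 mulrA.
Qed.

Lemma comp_polyXn' (p q : {poly int}) k : (p ^+ k) \Po q = (p \Po q) ^+ k.
Proof. by rewrite rmorphXn. Qed.

Lemma Spoly_nseq c d :
  Spoly (nseq d c) = (2%:P) ^+ d * ((P3 ^+ d) \Po 'X^c).
Proof.
elim: d => [|d IH].
  by rewrite /Spoly /= big_seq1 /qpoly big_nil !expr0 mul1r comp_polyC.
rewrite /= Spoly_cons IH (exprS (2%:P)) (exprS P3) comp_polyM.
rewrite {3}/P3 !comp_polyD !comp_polyXn' comp_polyX.
rewrite -[1 : {poly int}]/(1%:P) comp_polyC.
rewrite -[(c.*2)%N]muln2 exprM.
rewrite -[2%:P]/((1 + 1)%:P) polyCD; ring.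
Qed.

Lemma A_cE c d : (0 < c * d)%N ->
  A_c c d = 2 ^+ d * (((P3 ^+ d) \Po 'X^c)`_(c * d) - ((P3 ^+ d) \Po 'X^c)`_(c * d).+1).
Proof.
move=> hcd.
rewrite /A_c /Ev big_map.
rewrite (eq_big_seq (fun s => (qpoly s)`_(c * d) - (qpoly s)`_(c * d).+1)); last first.
  move=> s Hs; rewrite sym_charE //.
  have -> : sumn (sort geq s) = sumn s by apply: perm_sumn; rewrite perm_sort.
  rewrite (ev_sumn Hs) sumn_nseq mulnC eqxx.
  by rewrite /qpoly (perm_big _ (permEl (perm_sort geq s))).
rewrite sumrB -!coef_sum -/(Spoly _) Spoly_nseq -rmorphXn !coefCM mulrBr.
by [].
Qed.

Theorem theorem5p1 (c d : nat) (hc : (1 <= c)%N) (hd : (1 <= d)%N) :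
  (c = 1%N -> A_c c d = (2 ^ d * riordan d)%N%:Z) /\
  ((1 < c)%N -> A_c c d = (2 ^ d)%N%:Z * central_trinomial d).
Proof.
have hcd : (0 < c * d)%N by rewrite muln_gt0 hc hd.
split.
  move=> c1; rewrite A_cE // c1 expr1 comp_polyXr mul1n !coefP3.
  rewrite PoszM riordanE Nr_tri.
  have -> : ((2 ^ d)%N%:Z) = 2 ^+ d :> int by rewrite -natz natrX.
  have -> : (d%:Z - d%:Z) = 0%Z by lia.
  have -> : ((d.+1)%:Z - d%:Z) = (0%Z + 1) by lia.
  by [].
move=> c2; rewrite A_cE // !coef_comp_poly_Xn //.
rewrite dvdn_mulr // mulKn; last lia.
have -> : (c %| (c * d).+1)%N = false.
  by rewrite -addn1 dvdn_addr ?dvdn_mulr // dvdn1; apply/eqP; lia.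
by rewrite subr0 -natz natrX.
Qed.
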